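(* Let $p,q\in(0,1/2)$ with $\frac{\log p}{\log q}\notin\mathbb Q$. Then for any $r>0$ and any finite word $\mathbf i\in I^*$, $$\lim_{t\to+\infty}\Delta_{[0,r]}\big(t(K_{pq}-S_{\mathbf i}(0))\big)=\lim_{t\to+\infty}\Delta_{[-r,0]}\big(t(K_{pq}-S_{\mathbf i}(1))\big)=0.$$
   Context: For $p,q\in(0,1/2)$ let $S_1(x)=px$, $S_2(x)=qx$, $S_3(x)=px+1-p$, $S_4(x)=qx+1-q$, and let $K_{pq}$ be the attractor of $\{S_1,S_2,S_3,S_4\}$ (the unique nonempty compact $K\subset\mathbb R$ with $K=\bigcup_{i=1}^4S_i(K)$). $I=\{1,2,3,4\}$, $I^*=\bigcup_{n\ge1}I^n$ is the set of finite words, and for $\mathbf i=i_1\dots i_n$, $S_{\mathbf i}=S_{i_1}\circ\cdots\circ S_{i_n}$. For a set $X\subset\mathbb R$ and $s\in\mathbb R$, $X-s=\{x-s:x\in X\}$ and $tX=\{tx:x\in X\}$. For $a<b$ and compact $X\subset\mathbb R$, $\Delta_{[a,b]}(X)=d_H(X\cap[a,b],[a,b])$, where $d_H$ is the Hausdorff distance. *)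

(* Defs.v *)
From HB Require Import structures.
From mathcomp Require Import all_boot all_order all_algebra.
From mathcomp Require Import all_classical all_reals all_analysis.
Set Implicit Arguments. Unset Strict Implicit. Unset Printing Implicit Defensive.
Import Order.TTheory GRing.Theory Num.Theory.
Import numFieldTopology.Exports numFieldNormedType.Exports.
Local Open Scope classical_set_scope.
Local Open Scope ring_scope.

Section Defs.
Variable R : realType.

(* The four maps; index i : 'I_4 with values 0,1,2,3 stands for S_1,...,S_4. *)
Definition Smap (p q : R) (i : 'I_4) (x : R) : R :=
  match val i with
  | 0%N => p * x
  | 1%N => q * x
  | 2%N => p * x + 1 - p
  | _ => q * x + 1 - q
  end.

Definition Sword (p q : R) (w : seq 'I_4) : R -> R :=
  foldr (fun i f => Smap p q i \o f) id w.

Definition is_attractor (p q : R) (K : set R) : Prop :=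
  [/\ compact K, K !=set0 & K = \bigcup_(i in [set: 'I_4]) (Smap p q i @` K)].

(* distance from a point to a set, in extended reals (+oo for the empty set) *)
Definition edist (x : R) (B : set R) : \bar R :=
  ereal_inf [set (`|x - b|)%:E | b in B].

Definition hausdorff_dist (A B : set R) : \bar R :=
  Order.max (ereal_sup [set edist a B | a in A])
            (ereal_sup [set edist b A | b in B]).

Definition cint (a b : R) : set R := [set x | a <= x <= b].

Definition Delta (a b : R) (X : set R) : \bar R :=
  hausdorff_dist (X `&` cint a b) (cint a b).

Definition scale_shift (t s : R) (X : set R) : set R :=
  [set t * (x - s) | x in X].

End Defs.

(* Main.v *)
Require Import Defs.
From HB Require Import structures.
From mathcomp Require Import all_boot all_order all_algebra.
From mathcomp Require Import all_classical all_reals all_analysis.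
From mathcomp Require Import lra ring.
Import Order.TTheory GRing.Theory Num.Theory.
Import numFieldTopology.Exports numFieldNormedType.Exports.
Local Open Scope classical_set_scope.
Local Open Scope ring_scope.

Section Aux1.
Variable R : realType.

Lemma bernoulli (l : R) (k : nat) : 1 <= l -> 1 + k%:R * (l - 1) <= l ^+ k.
Proof.
move=> l1; elim: k => [|k IH]; first by rewrite expr0 mul0r addr0.
rewrite exprS -natr1.
have h0 : 0 <= k%:R :> R by [].
have h1 : 0 <= k%:R * (l - 1) * (l - 1) by rewrite -mulrA; apply: mulr_ge0 => //; apply: mulr_ge0; lra.
have h2 : l * (1 + k%:R * (l - 1)) <= l * l ^+ k by apply: ler_wpM2l => //; lra.
nra.
Qed.

Lemma pow_big (l B : R) : 1 < l -> exists k : nat, B <= l ^+ k.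
Proof.
move=> l1.
have d0 : 0 < l - 1 by lra.
exists (Num.truncn (`|B| / (l - 1))).+1.
have := @bernoulli l (Num.truncn (`|B| / (l - 1))).+1 (ltW l1).
have := truncnS_gt (`|B| / (l - 1)).
set k := (Num.truncn _).+1%:R => hk.
have : `|B| < k * (l - 1) by rewrite -ltr_pdivrMr.
have := ler_norm B. lra.
Qed.

Lemma pow_small (x A : R) : 0 < x < 1 -> 0 < A -> exists k : nat, x ^+ k < A.
Proof.
case/andP=> x0 x1 A0.
have hx : 1 < x^-1 by rewrite invf_gt1.
have [k hk] := @pow_big _ (A^-1 + 1) hx.
exists k.
rewrite exprVn in hk.
have xk0 : 0 < x ^+ k by apply: exprn_gt0.
have : A^-1 < (x ^+ k)^-1 by lra.
by rewrite ltf_pV2 // posrE.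
Qed.

End Aux1.

Section Aux2.
Variable R : realType.

Lemma kron (a eta : R) : 0 < a -> (forall x : rat, a != ratr x) -> 0 < eta ->
  exists m n : nat, 0 < m%:R * a - n%:R <= eta.
Proof.
move=> a0 irr eta0.
have [e [e0 e1 e2]] : exists e : R, [/\ 0 < e, e <= 1 & e <= eta].
  by case: (lerP eta 1) => h; [exists eta | exists 1]; split => //; lra.
pose fr (i : nat) := i%:R * a - (Num.truncn (i%:R * a))%:R.
have fr_itv i : 0 <= fr i < 1.
  have /truncn_itv : 0 <= i%:R * a by apply: mulr_ge0 => //; exact: ltW.
  rewrite /fr -natr1; lra.
have main : forall i j : nat, (j < i)%N -> `|fr i - fr j| < e/2 ->
    exists m n : nat, 0 < m%:R * a - n%:R <= eta.
  move=> i j ji hij.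
  have tle : (Num.truncn (j%:R * a) <= Num.truncn (i%:R * a))%N.
    apply: le_truncn; rewrite ler_pM2r // ler_nat; exact: ltnW.
  pose k := (i - j)%N.
  pose l := (Num.truncn (i%:R * a) - Num.truncn (j%:R * a))%N.
  have thE : k%:R * a - l%:R = fr i - fr j.
    by rewrite /k /l /fr !natrB //; [ring | exact: ltnW].
  have k0 : (0 < k)%N by rewrite subn_gt0.
  have k0r : 0 < k%:R :> R by rewrite ltr0n.
  have th0 : k%:R * a - l%:R != 0.
    apply/negP => /eqP h.
    have : a = l%:R / k%:R.
      have -> : l%:R = k%:R * a :> R by lra.
      by rewrite [k%:R * a]mulrC mulfK // gt_eqF.
    move=> aE; have := irr (l%:R / k%:R).
    by rewrite fmorph_div !rmorph_nat -aE eqxx.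
  move: hij; rewrite -thE.
  set th := k%:R * a - l%:R in th0 *.
  case: (ltgtP th 0) => hth; last by rewrite hth eqxx in th0.
  - move=> hab; rewrite ltr0_norm // in hab.
    pose th' := - th.
    have th'0 : 0 < th' by rewrite /th'; lra.
    have th'e : th' < e / 2 by rewrite /th'; lra.
    pose u := th'^-1.
    have uth : u * th' = 1 by rewrite /u mulVf // gt_eqF.
    have u2 : 2 < u.
      rewrite ltNge; apply/negP => hu.
      have : u * th' <= 2 * th' by apply: ler_wpM2r; lra.
      lra.
    have t2 : (2 <= Num.truncn u)%N by rewrite truncn_ge_nat; lra.
    have /truncn_itv hs : 0 <= u by lra.
    pose s := (Num.truncn u).-1.
    have ts : Num.truncn u = s.+2.-1 by rewrite /s; case: (Num.truncn u) t2.
    rewrite ts /= -!natr1 in hs; case/andP: hs => hs1 hs2.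
    have s1 : (0 < s)%N by move: t2; rewrite ts.
    have l0 : (0 < l)%N.
      rewrite -(ltr0n R).
      have : 0 < k%:R * a by apply: mulr_gt0.
      rewrite /th' /th in th'0. lra.
    have sl1 : (1 <= s * l)%N by rewrite muln_gt0 s1 l0.
    exists (s * k)%N, (s * l - 1)%N.
    rewrite natrB // !natrM.
    have -> : s%:R * k%:R * a - (s%:R * l%:R - 1) = 1 - s%:R * th' :> R.
      by rewrite /th' /th; ring.
    have s0 : 0 <= s%:R :> R by [].
    have h1 : s%:R * th' + th' <= 1.
      have : (s%:R + 1) * th' <= u * th' by apply: ler_wpM2r; lra.
      lra.
    have h2 : 1 < s%:R * th' + 2 * th'.
      have : u * th' < (s%:R + 1 + 1) * th' by rewrite ltr_pM2r //; lra.
      lra.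
    apply/andP; split; lra.
  - move=> hab; rewrite gtr0_norm // in hab.
    exists k, l; rewrite -/th; apply/andP; split => //; lra.
have Kgt : 2 / e < (Num.truncn (2 / e)).+1%:R by apply: truncnS_gt.
set K' := Num.truncn (2 / e) in Kgt.
pose Kn := K'.+1.
have Kn0 : 0 < Kn%:R :> R by rewrite ltr0n.
have Ke : 2 < Kn%:R * e by rewrite -ltr_pdivrMr.
pose bin (i : nat) := Num.truncn (Kn%:R * fr i).
have bin_itv i : (bin i)%:R <= Kn%:R * fr i < (bin i).+1%:R.
  apply: truncn_itv; apply: mulr_ge0; [exact: ltW | by case/andP: (fr_itv i)].
have binlt i : (bin i < Kn)%N.
  rewrite /bin truncn_lt_nat; last first.
    apply: mulr_ge0; [exact: ltW | by case/andP: (fr_itv i)].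
  have := fr_itv i; nra.
pose f := fun i : 'I_(Kn.+1) => (@inord K' (bin i)).
have : ~~ injectiveb f.
  apply/negP => /injectiveP inj; have := leq_card _ inj.
  by rewrite !card_ord ltnn.
case/injectivePn => i [j] ij fij.
have bij : bin i = bin j.
  by have := congr1 val fij; rewrite /f /= !inordK.
have close : `|fr i - fr j| < e / 2.
  have hi := bin_itv i; have hj := bin_itv j.
  rewrite bij -natr1 in hi; rewrite -natr1 in hj.
  have hd : `|Kn%:R * (fr i - fr j)| < 1.
    rewrite ltr_norml; apply/andP; split; lra.
  rewrite normrM gtr0_norm // in hd.
  nra.
case: (ltngtP i j) => hij.
- apply: (main j i hij); by rewrite distrC.
- exact: (main i j hij).
- by move: ij; rewrite (val_inj hij) eqxx.
Qed.

End Aux2.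

Section Aux3.
Variable R : realType.

Variables (p q : R).
Hypotheses (p0 : 0 < p) (p1 : p < 1) (q0 : 0 < q) (q1 : q < 1).
Hypothesis irr : forall x : rat, ln p / ln q != ratr x.

Lemma lam (rho : R) : 1 < rho -> exists m0 n0 : nat, p ^+ m0 < q ^+ n0 <= rho * p ^+ m0.
Proof.
move=> rho1.
have lp : ln p < 0 by apply: ln_lt0; rewrite p0 p1.
have lq : ln q < 0 by apply: ln_lt0; rewrite q0 q1.
have a0 : 0 < ln p / ln q.
  have -> : ln p / ln q = (- ln p) / (- ln q) by rewrite invrN mulrNN.
  apply: divr_gt0; lra.
have lr : 0 < ln rho by apply: ln_gt0.
have e0 : 0 < ln rho / (- ln q) by apply: divr_gt0; lra.
have [m [n /andP[h1 h2]]] := @kron R _ _ a0 irr e0.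
exists m, n.
have pm : 0 < p ^+ m by apply: exprn_gt0.
have qn : 0 < q ^+ n by apply: exprn_gt0.
have DE : ln (q ^+ n) - ln (p ^+ m) = (- ln q) * (m%:R * (ln p / ln q) - n%:R).
  rewrite !lnXn // -[ln q *+ n]mulr_natr -[ln p *+ m]mulr_natr.
  set c := ln p / ln q.
  have hc : ln p = ln q * c by rewrite /c mulrC divfK // lt_eqF.
  rewrite hc; ring.
have h2' : (- ln q) * (m%:R * (ln p / ln q) - n%:R) <= ln rho.
  by rewrite -ler_pdivlMl; [rewrite mulrC; lra | lra].
have h1' : 0 < (- ln q) * (m%:R * (ln p / ln q) - n%:R) by apply: mulr_gt0; lra.
apply/andP; split.
  rewrite -ltr_ln ?posrE //; lra.
rewrite -ler_ln ?posrE ?mulr_gt0 //; last by lra.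
rewrite (@lnM R rho (p ^+ m)) ?posrE //; last by lra.
lra.
Qed.



Lemma dense (rho : R) : 1 < rho -> exists2 u0 : R, 0 < u0 &
  forall z, 0 < z <= u0 -> exists a b : nat, z <= p ^+ a * q ^+ b <= rho * z.
Proof.
move=> rho1.
have [m0 [n0 /andP[h1 h2]]] := @lam rho rho1.
have pm : 0 < p ^+ m0 by apply: exprn_gt0.
have qn : 0 < q ^+ n0 by apply: exprn_gt0.
pose mu := p ^+ m0 / q ^+ n0.
have mu0 : 0 < mu by apply: divr_gt0.
have mu1 : mu < 1 by rewrite /mu ltr_pdivrMr // mul1r.
have rmu : 1 <= rho * mu by rewrite /mu mulrA ler_pdivlMr // mul1r.
have chain : forall j N, (n0 * j <= N)%N -> forall z, q ^+ N * mu ^+ j <= z <= q ^+ N ->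
    exists a b : nat, z <= p ^+ a * q ^+ b <= rho * z.
  elim=> [|j IH] N hjN z /andP[hz1 hz2].
    exists 0%N, N; rewrite expr0 mul1r; rewrite expr0 mulr1 in hz1.
    have qN : 0 < q ^+ N by apply: exprn_gt0.
    apply/andP; split => //; nra.
  case: (lerP (q ^+ N * mu ^+ j) z) => hz.
    apply: (IH N) => //; last by rewrite hz hz2.
    apply: leq_trans hjN; rewrite leq_mul2l leqnSn orbT //.
  have hjN' : (n0 * j <= N)%N.
    apply: leq_trans hjN; rewrite leq_mul2l leqnSn orbT //.
  exists (m0 * j)%N, (N - n0 * j)%N.
  have E : p ^+ (m0 * j) * q ^+ (N - n0 * j) = q ^+ N * mu ^+ j.
    rewrite /mu expr_div_n -!exprM -{2}(subnK hjN') exprD.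
    rewrite -mulrA [q ^+ (n0 * j) * _]mulrC divfK; first by rewrite mulrC.
    by rewrite expf_neq0 // gt_eqF.
  rewrite E; apply/andP; split; first exact: ltW.
  have X0 : 0 < q ^+ N * mu ^+ j by apply: mulr_gt0; apply: exprn_gt0.
  rewrite exprS in hz1.
  set X := q ^+ N * mu ^+ j in X0 hz *.
  have hX : q ^+ N * (mu * mu ^+ j) = X * mu by rewrite /X; ring.
  rewrite hX in hz1.
  have : X <= X * (rho * mu) by rewrite ler_peMr // ltW.
  have : rho * (X * mu) <= rho * z by apply: ler_wpM2l => //; lra.
  have -> : X * (rho * mu) = rho * (X * mu) by ring.
  lra.
have hmu : 1 < mu ^-1 by rewrite invf_gt1.
have [k0 hk0] := @pow_big R (mu ^-1) (q ^-1) hmu.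
have muk : mu ^+ k0 <= q.
  rewrite exprVn lef_pV2 ?posrE // in hk0; exact: exprn_gt0.
exists (q ^+ (n0 * k0)); first exact: exprn_gt0.
move=> z /andP[z0 zu].
have hq01 : 0 < q < 1 by rewrite q0 q1.
have [k hk] := @pow_small R q z hq01 z0.
case: (ex_minnP (ex_intro (fun k => q ^+ k < z) k hk)) => N' hN' hmin.
have hN'gt : (n0 * k0 < N')%N.
  rewrite ltnNge; apply/negP => hle.
  have : q ^+ (n0 * k0) <= q ^+ N' by apply: ler_wiXn2l => //; exact: ltW.
  lra.
have N'E : N' = N'.-1.+1 by case: N' hN' hmin hN'gt.
set N := N'.-1 in N'E.
have hqN : z <= q ^+ N.
  rewrite leNgt; apply/negP => /hmin; rewrite N'E ltnn //.
apply: (chain k0 N); first by rewrite -ltnS -N'E.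
apply/andP; split => //.
rewrite N'E exprS in hN'.
have qN : 0 < q ^+ N by apply: exprn_gt0.
have : q ^+ N * mu ^+ k0 <= q ^+ N * q by apply: ler_wpM2l => //; exact: ltW.
nra.
Qed.

Lemma cover (r eps : R) : 0 < r -> 0 < eps -> exists2 T0 : R, 0 < T0 &
  forall T, T0 <= T -> forall x, 0 <= x <= r -> exists a b : nat,
    0 <= T * (p ^+ a * q ^+ b) <= r /\ `|x - T * (p ^+ a * q ^+ b)| <= eps.
Proof.
move=> r0 eps0.
pose rho := 1 + eps / 2 / r.
have d0 : 0 < eps / 2 / r by apply: divr_gt0 => //; lra.
have rho1 : 1 < rho by rewrite /rho; lra.
have rhoE : (rho - 1) * r = eps / 2 by rewrite /rho addrAC subrr add0r divfK // gt_eqF.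
have [u0 u00 hu] := @dense rho rho1.
exists (r / u0); first exact: divr_gt0.
move=> T hT x /andP[x0 xr].
have T0 : 0 < T by apply: lt_le_trans hT; exact: divr_gt0.
have rT : r <= T * u0 by rewrite -ler_pdivrMr.
have [e' [e0 e1 e2]] : exists e' : R, [/\ 0 < e', e' <= eps & e' <= r].
  by case: (lerP eps r) => h; [exists eps | exists r]; split => //; lra.
have key : forall x', e' / 2 <= x' <= r -> exists a b : nat,
    x' <= rho * (T * (p ^+ a * q ^+ b)) /\ T * (p ^+ a * q ^+ b) <= x'.
  move=> x' /andP[hx1 hx2].
  pose z := x' / (rho * T).
  have rT0 : 0 < rho * T by apply: mulr_gt0 => //; lra.
  have zE : z * (rho * T) = x' by rewrite /z divfK // gt_eqF.
  have z0 : 0 < z by apply: divr_gt0 => //; lra.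
  have zu : z <= u0.
    rewrite leNgt; apply/negP => hz.
    have : u0 * T < z * T by rewrite ltr_pM2r.
    have : z * T <= z * (rho * T).
      rewrite mulrA ler_pM2r // ler_peMr //; lra.
    lra.
  have zz : 0 < z <= u0 by rewrite z0 zu.
  have [a [b /andP[g1 g2]]] := hu z zz.
  exists a, b; split.
    have hTg : T * z <= T * (p ^+ a * q ^+ b) by apply: ler_wpM2l => //; lra.
    rewrite -zE; have -> : z * (rho * T) = rho * (T * z) by ring.
    by apply: ler_wpM2l => //; lra.
  rewrite -zE.
  have : T * (p ^+ a * q ^+ b) <= T * (rho * z) by apply: ler_wpM2l => //; lra.
  have -> : T * (rho * z) = z * (rho * T) by ring.
  done.
have Trho : forall v, 0 <= v -> v <= r -> (rho - 1) * v <= eps / 2.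
  move=> v v0 vr; rewrite -rhoE; apply: ler_wpM2l => //; lra.
case: (lerP x (e' / 2)) => hx.
  have hh : e' / 2 <= e' / 2 <= r by apply/andP; split => //; lra.
  have [a [b [k1 k2]]] := key (e' / 2) hh.
  exists a, b.
  have g0 : 0 < T * (p ^+ a * q ^+ b).
    apply: mulr_gt0 => //; apply: mulr_gt0; exact: exprn_gt0.
  split; first by apply/andP; split; lra.
  rewrite ler_norml; apply/andP; split; lra.
have hh : e' / 2 <= x <= r by apply/andP; split => //; lra.
have [a [b [k1 k2]]] := key x hh.
exists a, b.
have g0 : 0 < T * (p ^+ a * q ^+ b).
  apply: mulr_gt0 => //; apply: mulr_gt0; exact: exprn_gt0.
split; first by apply/andP; split; lra.
have hh2 : T * (p ^+ a * q ^+ b) <= r by lra.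
have := Trho _ (ltW g0) hh2.
move=> hT2; rewrite ler_norml; apply/andP; split; nra.
Qed.

End Aux3.

Section D.
Variable R : realType.

Lemma Delta_bound (a b eps : R) (X : set R) : a <= b -> 0 <= eps ->
  (forall x, a <= x <= b -> exists v, X v /\ a <= v <= b /\ `|x - v| <= eps) ->
  (0 <= Delta a b X)%E /\ (Delta a b X <= eps%:E)%E.
Proof.
move=> ab e0 H.
have ed0 : forall (x : R) (B : set R), (0 <= Defs.edist x B)%E.
  by move=> x B; rewrite /Defs.edist; apply/ereal_infP => _ [y _ <-]; rewrite lee_fin normr_ge0.
rewrite /Delta /hausdorff_dist; split.
  rewrite le_max; apply/orP; right.
  apply: ereal_sup_ge; exists (Defs.edist a (X `&` cint a b)) => //.
  by exists a => //; rewrite /cint /= lexx ab.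
rewrite ge_max; apply/andP; split.
  apply: ge_ereal_sup => _ [v [Xv Iv] <-].
  apply: ge_ereal_inf; exists (`|v - v|%:E); first by exists v.
  by rewrite subrr normr0 lee_fin.
apply: ge_ereal_sup => _ [x Ix <-].
have [v [Xv [Iv hv]]] := H x Ix.
apply: ge_ereal_inf; exists (`|x - v|%:E); first by exists v.
by rewrite lee_fin.
Qed.

Lemma to_cvg (a b : R) (X : R -> set R) : a <= b ->
  (forall eps, 0 < eps -> exists M : R, forall t, M <= t -> forall x, a <= x <= b ->
     exists v, X t v /\ a <= v <= b /\ `|x - v| <= eps) ->
  Delta a b (X t) @[t --> +oo] --> 0%E.
Proof.
move=> ab H.
apply/fine_cvgP; split.
  have [M HM] := H 1 ltr01.
  apply: filterS (nbhs_pinfty_ge (num_real M)) => t tM.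
  have [h0 h1] := @Delta_bound a b 1 (X t) ab ler01 (HM t tM).
  by rewrite ge0_fin_numE // (le_lt_trans h1) // ltry.
apply/cvgrPdist_le => eps eps0.
have [M HM] := H eps eps0.
apply: filterS (nbhs_pinfty_ge (num_real M)) => t tM.
have [h0 h1] := @Delta_bound a b eps (X t) ab (ltW eps0) (HM t tM).
rewrite /comp /=; move: h0 h1; case: (Delta a b (X t)) => // d; rewrite !lee_fin => h0 h1 /=.
by rewrite sub0r normrN ger0_norm.
Qed.

End D.

Section IFS.
Variable R : realType.
Variables (p q : R).
Hypotheses (p0 : 0 < p) (q0 : 0 < q).

Lemma Smap_aff (i : 'I_4) : exists2 c : R, 0 < c & forall x, Smap p q i x = Smap p q i 0 + c * x.
Proof.
case: i => [[|[|[|k]]] hi]; rewrite /Smap /=.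
- by exists p => // x; ring.
- by exists q => // x; ring.
- by exists p => // x; ring.
- by exists q => // x; ring.
Qed.

Lemma Sword_aff (w : seq 'I_4) : exists2 c : R, 0 < c & forall x, Sword p q w x = Sword p q w 0 + c * x.
Proof.
elim: w => [|i w [c c0 IH]]; first by exists 1 => // x; rewrite /Sword /= add0r mul1r.
have [ci ci0 Hi] := Smap_aff i.
exists (ci * c); first exact: mulr_gt0.
move=> x; rewrite /Sword /= -!/(Sword p q w) IH Hi [Smap p q i (Sword p q w 0)]Hi.
ring.
Qed.

Variable K : set R.
Hypothesis KE : K = \bigcup_(i in [set: 'I_4]) (Smap p q i @` K).

Lemma K_inv (i : 'I_4) x : K x -> K (Smap p q i x).
Proof. by move=> Kx; rewrite KE; exists i => //; exists x. Qed.

Lemma Sword_K w x : K x -> K (Sword p q w x).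
Proof.
elim: w => [//|i w IH] Kx; rewrite /Sword /= -/(Sword p q w).
exact/K_inv/IH.
Qed.

Lemma K_p u m : K u -> K (p ^+ m * u).
Proof.
move=> Ku; elim: m => [|m IH]; first by rewrite expr0 mul1r.
have := @K_inv (@Ordinal 4 0 isT) _ IH; rewrite /Smap /= exprS mulrA //.
Qed.

Lemma K_q u m : K u -> K (q ^+ m * u).
Proof.
move=> Ku; elim: m => [|m IH]; first by rewrite expr0 mul1r.
have := @K_inv (@Ordinal 4 1 isT) _ IH; rewrite /Smap /= exprS mulrA //.
Qed.

Lemma K_p1 u m : K u -> K (1 - p ^+ m * (1 - u)).
Proof.
move=> Ku; elim: m => [|m IH]; first by rewrite expr0 mul1r subKr.
have := @K_inv (@Ordinal 4 2 isT) _ IH; rewrite /Smap /=.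
by have -> : p * (1 - p ^+ m * (1 - u)) + 1 - p = 1 - p ^+ m.+1 * (1 - u) by rewrite exprS; ring.
Qed.

Lemma K_q1 u m : K u -> K (1 - q ^+ m * (1 - u)).
Proof.
move=> Ku; elim: m => [|m IH]; first by rewrite expr0 mul1r subKr.
have := @K_inv (@Ordinal 4 3 isT) _ IH; rewrite /Smap /=.
by have -> : q * (1 - q ^+ m * (1 - u)) + 1 - q = 1 - q ^+ m.+1 * (1 - u) by rewrite exprS; ring.
Qed.

End IFS.

Theorem corollary8 (R : realType) (p q : R)
  (hp : 0 < p < 1 / 2) (hq : 0 < q < 1 / 2)
  (hirr : forall x : rat, ln p / ln q != ratr x)
  (K : set R) (hK : is_attractor p q K)
  (r : R) (hr : 0 < r) (w : seq 'I_4) (hw : w != [::]) :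
  (Delta 0 r (scale_shift t (Sword p q w 0) K) @[t --> +oo] --> 0%E) /\
  (Delta (- r) 0 (scale_shift t (Sword p q w 1) K) @[t --> +oo] --> 0%E).
Proof.
case/andP: hp => p0 p1; case/andP: hq => q0 q1.
have p1' : p < 1 by lra.
have q1' : q < 1 by lra.
case: hK => _ [x0 Kx0] KE.
have [c c0 hc] := @Sword_aff R p q p0 q0 w.
have hp01 : 0 < p < 1 by rewrite p0 p1'.
have A0 : 0 < (`|x0| + `|1 - x0| + 1)^-1 by rewrite invr_gt0; have := normr_ge0 x0; have := normr_ge0 (1 - x0); lra.
have [n hn] := @pow_small R p _ hp01 A0.
have pn0 : 0 < p ^+ n by apply: exprn_gt0.
have hn' : p ^+ n * (`|x0| + `|1 - x0| + 1) < 1.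
  by rewrite -ltr_pdivlMr ?mul1r //; have := normr_ge0 x0; have := normr_ge0 (1 - x0); lra.
have b1 : p ^+ n * (1 - x0) < 1.
  have : p ^+ n * (1 - x0) <= p ^+ n * `|1 - x0| by apply: ler_wpM2l; [lra | exact: ler_norm].
  have : p ^+ n * (`|x0| + `|1 - x0| + 1) = p ^+ n * `|x0| + p ^+ n * `|1 - x0| + p ^+ n by ring.
  have : 0 <= p ^+ n * `|x0| by apply: mulr_ge0; [lra | exact: normr_ge0].
  lra.
have b2 : p ^+ n * x0 < 1.
  have : p ^+ n * x0 <= p ^+ n * `|x0| by apply: ler_wpM2l; [lra | exact: ler_norm].
  have : p ^+ n * (`|x0| + `|1 - x0| + 1) = p ^+ n * `|x0| + p ^+ n * `|1 - x0| + p ^+ n by ring.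
  have : 0 <= p ^+ n * `|1 - x0| by apply: mulr_ge0; [lra | exact: normr_ge0].
  lra.
pose y1 := 1 - p ^+ n * (1 - x0).
have Ky1 : K y1 := @K_p1 R p q K KE x0 n Kx0.
have y10 : 0 < y1 by rewrite /y1; lra.
pose y2 := p ^+ n * x0.
have Ky2 : K y2 := @K_p R p q K KE x0 n Kx0.
have y21 : 0 < 1 - y2 by rewrite /y2; lra.
split.
- apply: to_cvg; first exact: ltW.
  move=> eps eps0.
  have [T0 T00 HT] := @cover R p q p0 p1' q0 q1' hirr r eps hr eps0.
  have cy : 0 < c * y1 by apply: mulr_gt0.
  exists (T0 / (c * y1)) => t tM x hx.
  have hT : T0 <= t * (c * y1) by rewrite -ler_pdivrMr.
  have [a [b [hv1 hv2]]] := HT _ hT x hx.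
  exists (t * (c * y1) * (p ^+ a * q ^+ b)); split; last by split.
  exists (Sword p q w (p ^+ a * (q ^+ b * y1))).
    exact: (@Sword_K R p q K KE w _ (@K_p R p q K KE _ a (@K_q R p q K KE _ b Ky1))).
  by rewrite hc; ring.
- apply: to_cvg; first by lra.
  move=> eps eps0.
  have [T0 T00 HT] := @cover R p q p0 p1' q0 q1' hirr r eps hr eps0.
  have cy : 0 < c * (1 - y2) by apply: mulr_gt0.
  exists (T0 / (c * (1 - y2))) => t tM x /andP[hx1 hx2].
  have hT : T0 <= t * (c * (1 - y2)) by rewrite -ler_pdivrMr.
  have hx : 0 <= - x <= r by apply/andP; split; lra.
  have [a [b [/andP[hv1 hv1'] hv2]]] := HT _ hT (- x) hx.
  exists (- (t * (c * (1 - y2)) * (p ^+ a * q ^+ b))); split; last first.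
    split; first by apply/andP; split; lra.
    by rewrite opprK -normrN opprD.
  exists (Sword p q w (1 - p ^+ a * (1 - (1 - q ^+ b * (1 - y2))))).
    exact: (@Sword_K R p q K KE w _ (@K_p1 R p q K KE _ a (@K_q1 R p q K KE _ b Ky2))).
  rewrite hc [Sword p q w 1]hc; ring.
Qed.
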